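(* The family of induced paw-free graphs is feasible: for every integer $n \geq 1$ and every integer $m$ with $0 \leq m \leq \binom{n}{2}$, there exists a graph with $n$ vertices and $m$ edges containing no induced paw.
   Context: All graphs are finite and simple. The paw is the graph consisting of a triangle $K_3$ together with one additional vertex joined by an edge to exactly one vertex of the triangle. A graph is induced paw-free if it has no induced subgraph isomorphic to the paw. *)

(* Defs.v *)
From mathcomp Require Import all_boot.
Set Implicit Arguments. Unset Strict Implicit. Unset Printing Implicit Defensive.

Record simple_graph (V : finType) := SimpleGraph {
  adj : rel V;
  adj_sym : symmetric adj;
  adj_irrefl : irreflexive adj }.

Definition edges (V : finType) (G : simple_graph V) : {set {set V}} :=
  [set E : {set V} | [exists x, exists y, (E == [set x; y]) && adj G x y]].

(* G contains an induced paw: distinct a b c d, where a b c form a triangle,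
   d is adjacent to a and to neither b nor c (this is exactly the induced
   subgraph on {a,b,c,d} being isomorphic to the paw). *)
Definition has_induced_paw (V : finType) (G : simple_graph V) : bool :=
  [exists a, exists b, exists c, exists d,
     [&& uniq [:: a; b; c; d],
         adj G a b, adj G b c, adj G a c,
         adj G d a, ~~ adj G d b & ~~ adj G d c]].

Definition induced_paw_free (V : finType) (G : simple_graph V) : bool :=
  ~~ has_induced_paw G.

(* Main.v *)
Require Import Defs.
From mathcomp Require Import all_boot zify.
Set Implicit Arguments. Unset Strict Implicit. Unset Printing Implicit Defensive.

Lemma edges_count n (G : simple_graph 'I_n) :
  #|edges G| = \sum_(y : 'I_n) #|[set x : 'I_n | (x < y) && adj G x y]|.
Proof.
pose S := [set u : 'I_n * 'I_n | (u.2 < u.1) && adj G u.2 u.1].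
pose f := fun u : 'I_n * 'I_n => [set u.2; u.1].
have -> : edges G = f @: S.
  apply/setP => E; rewrite /edges inE; apply/idP/idP.
  - case/existsP => x /existsP [y /andP [/eqP -> Hxy]].
    have Hne : x != y by apply: contraTneq Hxy => ->; rewrite adj_irrefl.
    case: (ltngtP x y) => [lt|gt|eq]; last by move: Hne; rewrite (val_inj eq) eqxx.
    + by apply/imsetP; exists (y, x); rewrite // inE /= lt.
    + apply/imsetP; exists (x, y); first by rewrite inE /= gt adj_sym.
      by rewrite /f /= setUC.
  - case/imsetP => u; rewrite inE => /andP [_ Hu] ->.
    by apply/existsP; exists u.2; apply/existsP; exists u.1; rewrite eqxx Hu.
rewrite card_in_imset; last first.
  move=> [a b] [c d]; rewrite !inE /= => /andP [lt1 _] /andP [lt2 _]; rewrite /f /= => E.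
  have Hb : b \in [set d; c] by rewrite -E !inE eqxx.
  have Ha : a \in [set d; c] by rewrite -E !inE eqxx orbT.
  rewrite !inE in Ha Hb.
  case/orP: Ha => /eqP Ha; case/orP: Hb => /eqP Hb; subst => //; lia.
rewrite -sum1_card (eq_bigl (fun u : 'I_n * 'I_n => true && ((u.2 < u.1) && adj G u.2 u.1))); last first.
  by move=> u; rewrite inE.
rewrite -(pair_big_dep predT (fun (y : 'I_n) (x : 'I_n) => (x < y) && adj G x y) (fun _ _ => 1)).
by apply: eq_bigr => y _; rewrite -sum1_card; apply: eq_bigl => x; rewrite inE.
Qed.

Lemma card_lt n k : k <= n -> #|[set x : 'I_n | x < k]| = k.
Proof.
move=> kn.
have -> : [set x : 'I_n | x < k] = widen_ord kn @: [set: 'I_k].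
  apply/setP => x; rewrite inE; apply/idP/imsetP.
  - move=> xk; exists (Ordinal xk) => //; exact: val_inj.
  - by case=> y _ ->; rewrite /= ltn_ord.
rewrite card_imset ?cardsT ?card_ord //.
by move=> a b /(congr1 val) /= /val_inj.
Qed.

Definition cls (p q y : nat) : nat :=
  if y < q.*2 then y./2 else if y < q.*2 + p then q else y.

Definition bb (K p q y : nat) : nat :=
  if y < K then (if y < q.*2 then (y./2).*2 else if y < q.*2 + p then q.*2 else y) else 0.

Lemma back_eq K p q x y :
  ((x < y) && [&& x < K, y < K & cls p q x != cls p q y]) = (x < bb K p q y).
Proof.
rewrite /bb /cls.
case: (ltnP y K) => yK; last by rewrite andbF andbF; case: ltnP => //= xy; lia.
idtac.
case: (ltnP y q.*2) => y2q.
  have -> : x < (y./2).*2 = (x./2 < y./2) by rewrite ltn_half_double.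
  case: (ltnP x y) => xy /=.
    have xK : x < K by lia.
    rewrite xK /= (_ : x < q.*2) ?ltn_neqAle ?half_leq ?andbT //; [exact: ltnW | lia].
  apply/esym/negbTE; rewrite -leqNgt; exact: half_leq.
case: (ltnP y (q.*2 + p)) => y2qp.
  case: (ltnP x q.*2) => x2q.
    have -> : x < y by lia.
    have -> : x < K by lia.
    by rewrite /= neq_ltn ltn_half_double x2q.
  case: (ltnP x y) => xy //=; rewrite (_ : x < q.*2 + p) ?eqxx ?andbF //; lia.
case: (ltnP x y) => xy /=; last by lia.
have -> : x < K by lia.
case: ifP => x2q.
  apply/negP => /eqP E; have := half_leq (ltnW xy); lia.
case: ifP => x2qp; apply/negP => /eqP E; lia.
Qed.

Lemma sum_odd q : \sum_(0 <= y < q.*2) odd y = q.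
Proof.
elim: q => [|q IH]; first by rewrite big_geq.
rewrite doubleS big_nat_recr // big_nat_recr; last lia.
rewrite IH /= odd_double /=; lia.
Qed.

Lemma bb_le K p q y : bb K p q y <= y.
Proof.
rewrite /bb; case: ifP => // _; case: ifP => [_|/negbT h].
  by have := odd_double_half y; lia.
case: ifP => //; lia.
Qed.

Lemma sum_bb n K p q : K <= n -> q.*2 + p <= K ->
  \sum_(y < n) bb K p q y + 'C(p, 2) + q = 'C(K, 2).
Proof.
move=> Kn hK.
rewrite -(big_mkord xpredT) (big_cat_nat (leq0n K) Kn) /=.
rewrite [X in _ + X + _ + _]big_nat [X in _ + X + _ + _]big1 ?addn0; last first.
  by move=> i /andP [Ki _]; rewrite /bb ltnNge Ki.
have split1 : \sum_(0 <= y < K) y = \sum_(0 <= y < K) bb K p q y + \sum_(0 <= y < K) (y - bb K p q y).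
  rewrite -big_split /=; apply: eq_bigr => y _; rewrite subnKC //; exact: bb_le.
rewrite -(bin2_sum K) split1 -addnA; congr (_ + _).
rewrite (big_cat_nat (leq0n q.*2) (leq_trans (leq_addr p _) hK)) /=.
rewrite (big_cat_nat (leq_addr p _) hK) /=.
rewrite [X in _ + (_ + X)]big_nat [X in _ + (_ + X)]big1 ?addn0; last first.
  move=> i /andP [h1 h2]; rewrite /bb h2 ltnNge (leq_trans (leq_addr p _) h1) /=.
  by rewrite ltnNge h1 subnn.
rewrite [RHS]addnC; congr (_ + _).
  rewrite -[X in \sum_(X <= _ < _) _]add0n big_addn addKn.
  rewrite -bin2_sum; apply: eq_big_nat => i /andP [_ ip].
  rewrite /bb ifT; last lia.
  rewrite ifF; last lia.
  rewrite ifT; last lia.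
  lia.
rewrite -{1}(sum_odd q); apply: eq_big_nat => i /andP [_ ip].
rewrite /bb ifT; last lia.
rewrite ifT //.
by have := odd_double_half i; lia.
Qed.

Definition gadj n K p q : rel 'I_n :=
  fun x y => [&& (x:nat) < K, (y:nat) < K & cls p q x != cls p q y].

Lemma gadj_sym n K p q : symmetric (@gadj n K p q).
Proof. by move=> x y; rewrite /gadj andbCA eq_sym. Qed.

Lemma gadj_irr n K p q : irreflexive (@gadj n K p q).
Proof. by move=> x; rewrite /gadj eqxx !andbF. Qed.

Definition GG n K p q := SimpleGraph (@gadj_sym n K p q) (@gadj_irr n K p q).

Lemma GG_free n K p q : induced_paw_free (GG n K p q).
Proof.
apply/negP; case/existsP => a; case/existsP => b; case/existsP => c; case/existsP => d.
move=> /andP [_ /andP [ab /andP [bc /andP [ac /andP [da /andP [db dc]]]]]].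
move: ab bc da db dc; rewrite /= /gadj.
case/and3P => aK bK _; case/and3P => _ cK /eqP bc; case/and3P => dK _ _.
rewrite dK bK cK /= !negbK => /eqP db /eqP dc.
by apply: bc; rewrite -db -dc.
Qed.

Lemma GG_count n K p q : K <= n -> q.*2 + p <= K ->
  #|edges (GG n K p q)| + 'C(p, 2) + q = 'C(K, 2).
Proof.
move=> Kn hK; rewrite edges_count -(sum_bb Kn hK); congr (_ + _ + _).
apply: eq_bigr => y _.
have -> : [set x : 'I_n | (x < y) && adj (GG n K p q) x y] = [set x : 'I_n | x < bb K p q y].
  by apply/setP => x; rewrite !inE /= /gadj back_eq.
by rewrite card_lt // (leq_trans (bb_le _ _ _ _)) // ltnW.
Qed.

Lemma binS2 k : 'C(k.+1, 2) = 'C(k, 2) + k.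
Proof. by rewrite binS bin1. Qed.

Lemma find_tri t : exists k, 0 < k /\ 'C(k, 2) <= t < 'C(k, 2) + k.
Proof.
elim: t => [|t [k [k0 /andP [lo hi]]]]; first by exists 1.
case: (ltnP t.+1 ('C(k, 2) + k)) => h.
  by exists k; split => //; rewrite h andbT; lia.
exists k.+1; split => //; rewrite binS2; lia.
Qed.

Lemma bin2_bound p : p.*2 <= 'C(p, 2) + 3.
Proof.
elim: p => [|p IH] //; rewrite binS2.
case: p IH => [|[|p]] IH //; lia.
Qed.

Theorem mainTheorem3 (n m : nat) :
  1 <= n -> m <= 'C(n, 2) ->
  exists G : simple_graph 'I_n, #|edges G| = m /\ induced_paw_free G.
Proof.
move=> n1 hm.
have [k [k0 /andP [lo hi]]] := find_tri m.
case: (eqVneq m 'C(k, 2)) => Em.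
  have kn : k <= n.
    rewrite leqNgt; apply/negP => nk.
    have := leq_bin2l 2 nk; rewrite binS2; lia.
  exists (GG n k 0 0); split; last exact: GG_free.
  have := @GG_count n k 0 0 kn (leq0n _); rewrite /= !addn0 => ->; exact/esym.
have kn : k < n.
  rewrite ltnNge; apply/negP => nk.
  have := leq_bin2l 2 nk; lia.
have [p [p0 /andP [plo phi]]] := find_tri ('C(k, 2) + k - m).
have hb := bin2_bound p.
set q := 'C(k, 2) + k - m - 'C(p, 2).
have hK : q.*2 + p <= k.+1 by rewrite /q; lia.
exists (GG n k.+1 p q); split; last exact: GG_free.
have := @GG_count n k.+1 p q kn hK; rewrite binS2; move: (#|edges _|) => e; rewrite /q; lia.
Qed.
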